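(* With the natural actions of the symmetric groups, the maps $\phi^0$ and $\phi^1$ are injective morphisms of symmetric set-operads from $\mathcal{FF}^\Sigma$ to the symmetric set-operads underlying $\mathrm{Mould}_0^\Sigma$ and $\mathrm{Mould}_1^\Sigma$, respectively.
   Context: $\mathcal{FF}(n)$ is the set of reduced formal fractions whose numerator and denominator are products of symbols $[S]$, $\emptyset\ne S\subseteq\{1,\dots,n\}$, i.e. the free abelian group written multiplicatively on these symbols. For $F\in\mathcal{FF}(m)$, $G\in\mathcal{FF}(n)$: $F\circ_i G=[S_{i,n}]\,F(1,\dots,i-1,S_{i,n},i+n,\dots,m+n-1)\,G(i,\dots,i+n-1)$, where $S_{i,n}=\{i,\dots,i+n-1\}$ and $F(A_1,\dots,A_m)$ replaces each $[S]$ by $[\bigcup_{k\in S}A_k]$. $\mathcal{FF}^\Sigma$ is $\mathcal{FF}$ with $\sigma\in S_n$ acting by $[S]\mapsto[\sigma(S)]$. $\mathrm{Mould}_0(n)=\mathrm{Mould}_1(n)=\mathbb{Q}(u_1,\dots,u_n)$ with compositions $F\circ_iG=\Sigma_{i,n}F(u_1,\dots,u_{i-1},\Sigma_{i,n},u_{i+n},\dots,u_{m+n-1})G(u_i,\dots,u_{i+n-1})$, $\Sigma_{i,n}=u_i+\dots+u_{i+n-1}$ (for $\mathrm{Mould}_0$), and $F\circ_iG=(\Pi_{i,n}-1)F(u_1,\dots,u_{i-1},\Pi_{i,n},u_{i+n},\dots,u_{m+n-1})G(u_i,\dots,u_{i+n-1})$, $\Pi_{i,n}=u_i\cdots u_{i+n-1}$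 (for $\mathrm{Mould}_1$); $S_n$ acts by permuting the variables $u_1,\dots,u_n$; the superscript $\Sigma$ denotes these symmetric operads. $\phi^0([S])=\sum_{j\in S}u_j$ and $\phi^1([S])=\prod_{j\in S}u_j-1$, extended multiplicatively. *)

(* Defs.v *)
From HB Require Import structures.
From mathcomp Require Import all_boot all_order all_algebra all_fingroup.
Set Implicit Arguments. Unset Strict Implicit. Unset Printing Implicit Defensive.
Import Order.TTheory GRing.Theory Num.Theory.
Local Open Scope ring_scope.

(* Indices are 0-based: {1,...,n} is rendered as 'I_n.                     *)
Definition nesub (n : nat) := {S : {set 'I_n} | S != set0}.

(* FF(n) = free abelian group on the symbols [S]; an element is recorded by
   its (finitely supported) exponent vector, written additively.           *)
Definition FF (n : nat) := {ffun nesub n -> int}.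

Definition FFgen (n : nat) (S : {set 'I_n}) : FF n :=
  [ffun T : nesub n => ((val T == S) : nat)%:Z].

Definition FFmap (p q : nat) (f : {set 'I_p} -> {set 'I_q}) (F : FF p) : FF q :=
  [ffun T : nesub q => \sum_(S : nesub p | f (val S) == val T) F S].

(* Composition block data, for arities m.+1 and n.+1, position i : 'I_m.+1
   (0-based).  blk i k is the set A_k of the paper: {k} for k < i,
   S_{i,n.+1} = {i,...,i+n} for k = i, and {k+n} for k > i.               *)
Definition blk (m n : nat) (i k : 'I_m.+1) : {set 'I_(m + n).+1} :=
  [set j : 'I_(m + n).+1 |
     if (k < i)%N then (j == k :> nat)
     else if k == i then (i <= j <= i + n)%N
     else (j == (k + n)%N :> nat)].

Definition shft (m n : nat) (i : 'I_m.+1) (j : 'I_n.+1) : 'I_(m + n).+1 :=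
  inord (i + j)%N.

Definition FFcomp (m n : nat) (i : 'I_m.+1) (F : FF m.+1) (G : FF n.+1)
  : FF (m + n).+1 :=
  FFgen (blk n i i)
  + FFmap (fun S => \bigcup_(k in S) blk n i k) F
  + FFmap (fun S => [set shft i j | j in S]) G.

Definition FFact (n : nat) (s : {perm 'I_n}) (F : FF n) : FF n :=
  FFmap (fun S => s @: S) F.

Definition FFunit : FF 1 := - FFgen [set ord0].

(* Q[u_1,...,u_n] as iterated univariate polynomials:
   mpoly n.+1 = (mpoly n)[u_{n+1}]                                         *)
Fixpoint mpoly (n : nat) : idomainType :=
  match n with
  | 0 => rat
  | k.+1 => {poly mpoly k}
  end.

Fixpoint mX (n : nat) : 'I_n -> mpoly n :=
  match n return 'I_n -> mpoly n with
  | 0 => fun _ => 0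
  | k.+1 => fun i => if unlift ord_max i is Some j then (mX j)%:P else 'X
  end.

Fixpoint meval (K : fieldType) (n : nat) : ('I_n -> K) -> mpoly n -> K :=
  match n return ('I_n -> K) -> mpoly n -> K with
  | 0 => fun _ c => ratr c
  | k.+1 => fun v p =>
      (map_poly (@meval K k (fun i => v (widen_ord (leqnSn k) i))) p).[v ord_max]
  end.

Definition Mould (n : nat) := {fraction mpoly n}.

Definition u (n : nat) (j : 'I_n) : Mould n := tofrac (mX j).

Definition msubst (m n : nat) (v : 'I_m -> Mould n) (F : Mould m) : Mould n :=
  let r := repr_of F in meval v (frac r).1 / meval v (frac r).2.

Definition Sig (m n : nat) (i k : 'I_m.+1) : Mould (m + n).+1 :=
  \sum_(j in blk n i k) u j.

Definition Mcomp0 (m n : nat) (i : 'I_m.+1) (F : Mould m.+1) (G : Mould n.+1)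
  : Mould (m + n).+1 :=
  Sig n i i * msubst (Sig n i) F * msubst (fun j => u (shft i j)) G.

Definition Pi (m n : nat) (i k : 'I_m.+1) : Mould (m + n).+1 :=
  \prod_(j in blk n i k) u j.

Definition Mcomp1 (m n : nat) (i : 'I_m.+1) (F : Mould m.+1) (G : Mould n.+1)
  : Mould (m + n).+1 :=
  (Pi n i i - 1) * msubst (Pi n i) F * msubst (fun j => u (shft i j)) G.

Definition Mact (n : nat) (s : {perm 'I_n}) (F : Mould n) : Mould n :=
  msubst (fun j => u (s j)) F.

Definition Munit0 : Mould 1 := (u ord0)^-1.
Definition Munit1 : Mould 1 := (u ord0 - 1)^-1.

Definition phi0 (n : nat) (F : FF n) : Mould n :=
  \prod_(S : nesub n) (\sum_(j in val S) u j) ^ (F S).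

Definition phi1 (n : nat) (F : FF n) : Mould n :=
  \prod_(S : nesub n) (\prod_(j in val S) u j - 1) ^ (F S).

(* Main.v *)
Require Import Defs.
From HB Require Import structures.
From mathcomp Require Import all_boot all_order all_algebra all_fingroup.
From mathcomp Require Import zify.
Set Implicit Arguments. Unset Strict Implicit. Unset Printing Implicit Defensive.
Import Order.TTheory GRing.Theory Num.Theory.
Local Open Scope ring_scope.
Local Open Scope quotient_scope.

Definition packRM (R S : nzRingType) (f : R -> S) (h1 : zmod_morphism f)
  (h2 : monoid_morphism f) : {rmorphism R -> S} :=
  HB.pack f (GRing.isZmodMorphism.Build _ _ f h1) (GRing.isMonoidMorphism.Build _ _ f h2).

Lemma packRME (R S : nzRingType) (f : R -> S) h1 h2 x : @packRM R S f h1 h2 x = f x.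
Proof. by []. Qed.

Lemma fracE (R : idomainType) (x : {fraction R}) :
  x = tofrac (frac (repr_of x)).1 / tofrac (frac (repr_of x)).2.
Proof.
have e : generic_quotient.repr x = repr_of x by rewrite unlock.
set r := repr_of x.
have -> : x = \pi_({fraction R}) r by rewrite /r -e generic_quotient.reprK.
have hd : (frac r).2 != 0 by apply: denom_ratioP.
apply: (@mulIf _ (tofrac (frac r).2)); first by rewrite tofrac_eq0.
rewrite mulfVK ?tofrac_eq0 //.
unlock tofrac. rewrite !piE. apply/eqmodP; rewrite /= FracField.equivfE /=.
rewrite !numden_Ratio ?oner_neq0 ?mulr1 ?mulf_neq0 ?oner_neq0 //.
by rewrite mulrC.
Qed.

Section Meval.
Variables (K : fieldType) (g : {rmorphism rat -> K}).

Lemma meval_morph n (v : 'I_n -> K) :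
  zmod_morphism (meval v) * monoid_morphism (meval v).
Proof.
elim: n v => [|k IH] v.
  split; [move=> x y|split; [|move=> x y]] => /=; rewrite -!(fmorph_eq_rat g).
  - exact: rmorphB.
  - exact: rmorph1.
  - exact: rmorphM.
have [h1 h2] := IH (fun i => v (widen_ord (leqnSn k) i)).
pose f := packRM h1 h2.
have E p : meval v p = (map_poly f p).[v ord_max] by [].
split; [move=> x y|split; [|move=> x y]]; rewrite !E.
- by rewrite rmorphB hornerD hornerN.
- by rewrite rmorph1 hornerC.
- by rewrite rmorphM hornerM.
Qed.

Lemma mX_widen k (j : 'I_k) : mX (widen_ord (leqnSn k) j) = (mX j)%:P :> mpoly k.+1.
Proof.
rewrite /=.
have -> : widen_ord (leqnSn k) j = lift ord_max j by apply: val_inj; rewrite /= /bump leqNgt ltn_ord.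
by rewrite liftK.
Qed.

Lemma mX_max k : mX (@ord_max k) = 'X :> mpoly k.+1.
Proof. by rewrite /= unlift_none. Qed.

Definition mevalRM n (v : 'I_n -> K) : {rmorphism mpoly n -> K} :=
  packRM (meval_morph v).1 (meval_morph v).2.

Lemma mevalS k (v : 'I_k.+1 -> K) (p : mpoly k.+1) :
  meval v p = (map_poly (mevalRM (fun i => v (widen_ord (leqnSn k) i))) p).[v ord_max].
Proof. by []. Qed.

Lemma meval_mX n (v : 'I_n -> K) j : meval v (mX j) = v j.
Proof.
elim: n v j => [|k IH] v j; first by case: j.
case: (unliftP ord_max j) => [j'|] ->.
  have -> : lift ord_max j' = widen_ord (leqnSn k) j' by apply: val_inj; rewrite /= /bump leqNgt ltn_ord.
  by rewrite mX_widen mevalS map_polyC hornerC /= IH.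
by rewrite mX_max mevalS map_polyX hornerX.
Qed.

End Meval.

Lemma meval_uniq (K : fieldType) n (v : 'I_n -> K) (f : {rmorphism mpoly n -> K}) :
  (forall j, f (mX j) = v j) -> f =1 meval v.
Proof.
elim: n v f => [|k IH] v f hf p.
  by rewrite /= -(fmorph_eq_rat f).
pose f' : {rmorphism mpoly k -> K} := f \o polyC.
have hf' : forall j, f' (mX j) = v (widen_ord (leqnSn k) j).
  by move=> j; rewrite /f' /= -mX_widen hf.
have E := IH _ f' hf'.
change (f p = (map_poly (meval (fun i => v (widen_ord (leqnSn k) i))) p).[v ord_max]).
rewrite -(eq_map_poly E) -(hf ord_max) mX_max.
elim/poly_ind: p => [|p c IHp]; first by rewrite !rmorph0 horner0.
by rewrite !rmorphD !rmorphM /= (map_polyX f') (map_polyC f') hornerD hornerM IHp hornerX hornerC.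
Qed.

Fixpoint pev (R : comNzRingType) (c0 : {rmorphism rat -> R}) (n : nat)
  : ('I_n -> R) -> mpoly n -> R :=
  match n return ('I_n -> R) -> mpoly n -> R with
  | 0 => fun _ x => c0 x
  | k.+1 => fun v p =>
      (map_poly (@pev R c0 k (fun i => v (widen_ord (leqnSn k) i))) p).[v ord_max]
  end.

Lemma pev_morph (R : comNzRingType) (c0 : {rmorphism rat -> R}) n (v : 'I_n -> R) :
  zmod_morphism (pev c0 v) * monoid_morphism (pev c0 v).
Proof.
elim: n v => [|k IH] v.
  split; [move=> x y|split; [|move=> x y]] => /=.
  - exact: rmorphB.
  - exact: rmorph1.
  - exact: rmorphM.
have [h1 h2] := IH (fun i => v (widen_ord (leqnSn k) i)).
pose f := packRM h1 h2.
have E p : pev c0 v p = (map_poly f p).[v ord_max] by [].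
split; [move=> x y|split; [|move=> x y]]; rewrite !E.
- by rewrite rmorphB hornerD hornerN.
- by rewrite rmorph1 hornerC.
- by rewrite rmorphM hornerM.
Qed.

Definition pevRM (R : comNzRingType) (c0 : {rmorphism rat -> R}) n (v : 'I_n -> R)
  : {rmorphism mpoly n -> R} :=
  packRM (pev_morph c0 v).1 (pev_morph c0 v).2.

Lemma pev_mX (R : comNzRingType) (c0 : {rmorphism rat -> R}) n (v : 'I_n -> R) j :
  pev c0 v (mX j) = v j.
Proof.
elim: n v j => [|k IH] v j; first by case: j.
have E p : pev c0 v p = (map_poly (pevRM c0 (fun i => v (widen_ord (leqnSn k) i))) p).[v ord_max] by [].
case: (unliftP ord_max j) => [j'|] ->.
  have -> : lift ord_max j' = widen_ord (leqnSn k) j' by apply: val_inj; rewrite /= /bump leqNgt ltn_ord.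
  by rewrite mX_widen E map_polyC hornerC /= IH.
by rewrite mX_max E map_polyX hornerX.
Qed.

Fixpoint cst (N : nat) : rat -> mpoly N :=
  match N return rat -> mpoly N with
  | 0 => fun x => x
  | k.+1 => fun x => (cst k x)%:P
  end.

Lemma cst_morph N : zmod_morphism (cst N) * monoid_morphism (cst N).
Proof.
elim: N => [|k [h1 h2]]; first by split => //; split.
have E x : cst k.+1 x = (cst k x)%:P by [].
split; [move=> x y|split; [|move=> x y]]; rewrite !E.
- by rewrite h1 polyCB.
- by rewrite h2.1.
- by rewrite h2.2 polyCM.
Qed.

Definition cstRM N : {rmorphism rat -> mpoly N} := packRM (cst_morph N).1 (cst_morph N).2.
Definition cstF N : {rmorphism rat -> Mould N} := @tofrac (mpoly N) \o cstRM N.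

Definition mevF N n (w : 'I_n -> Mould N) : {rmorphism mpoly n -> Mould N} := mevalRM (cstF N) w.
Definition pevP N n (q : 'I_n -> mpoly N) : {rmorphism mpoly n -> mpoly N} := pevRM (cstRM N) q.

Lemma mevF_mX N n (w : 'I_n -> Mould N) j : meval w (mX j) = w j.
Proof. exact: (meval_mX (cstF N)). Qed.

Lemma meval_ext (K : fieldType) (g : {rmorphism rat -> K}) n (v v' : 'I_n -> K) :
  v =1 v' -> meval v =1 meval v'.
Proof.
move=> e p; apply: (meval_uniq (f := mevalRM g v)) => j.
by rewrite /= (meval_mX g) e.
Qed.

Lemma meval_tofrac N n (q : 'I_n -> mpoly N) p :
  meval (fun k => tofrac (q k)) p = tofrac (pev (cstRM N) q p).
Proof.
symmetry; apply: (meval_uniq (f := @tofrac (mpoly N) \o pevP q)) => j.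
by rewrite /= pev_mX.
Qed.

Lemma meval_pev N n (q : 'I_n -> mpoly N) (w : 'I_N -> Mould n) p :
  meval w (pev (cstRM N) q p) = meval (fun k => meval w (q k)) p.
Proof.
apply: (meval_uniq (f := mevF w \o pevP q)) => j.
by rewrite /= pev_mX.
Qed.

Lemma meval_u n p : meval (@u n) p = tofrac p.
Proof.
symmetry; apply: (meval_uniq (f := @tofrac (mpoly n))) => j //.
Qed.

Lemma meval_inj N n (q : 'I_n -> mpoly N) (w : 'I_N -> Mould n) :
  (forall k, meval w (q k) = u k) ->
  forall p, meval (fun k => tofrac (q k)) p = 0 -> p = 0.
Proof.
move=> hw p; rewrite meval_tofrac => /eqP; rewrite tofrac_eq0 => /eqP h0.
apply/eqP; rewrite -tofrac_eq0 -meval_u -(meval_ext (cstF n) hw) -meval_pev h0.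
by apply/eqP; exact: (rmorph0 (mevF w)).
Qed.

Section Msubst.
Variables (m n : nat) (v : 'I_m -> Mould n).
Hypothesis Hv : forall p, meval v p = 0 -> p = 0.

Let mv := mevF v.
Lemma mvE p : mv p = meval v p. Proof. by []. Qed.

Lemma mv_neq0 p : p != 0 -> meval v p != 0.
Proof. by move=> hp; apply/eqP => /Hv /eqP; rewrite (negbTE hp). Qed.

Lemma msubst_frac a b : b != 0 -> msubst v (tofrac a / tofrac b) = meval v a / meval v b.
Proof.
move=> hb; rewrite /msubst.
set x := tofrac a / tofrac b.
have ex := fracE x.
set n' := (frac (repr_of x)).1 in ex *.
set d' := (frac (repr_of x)).2 in ex *.
have hd' : d' != 0 by apply: denom_ratioP.
have hb' : tofrac b != 0 :> Mould m by rewrite tofrac_eq0.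
have hd'' : tofrac d' != 0 :> Mould m by rewrite tofrac_eq0.
have : a * d' = n' * b.
  apply/eqP; rewrite -tofrac_eq !tofracM -eqr_div //.
  by rewrite /x in ex; rewrite -ex.
move=> /(congr1 mv); rewrite !rmorphM !mvE => e.
apply/eqP; rewrite eqr_div ?mv_neq0 //.
by rewrite -e.
Qed.

Lemma msubst_morph : zmod_morphism (msubst v) * monoid_morphism (msubst v).
Proof.
have F (x : Mould m) := fracE x.
have D (x : Mould m) : (frac (repr_of x)).2 != 0 by apply: denom_ratioP.
split; [move=> x y|split; [|move=> x y]].
- set a := (frac (repr_of x)).1; set b := (frac (repr_of x)).2.
  set c := (frac (repr_of y)).1; set d := (frac (repr_of y)).2.
  have ex : x = tofrac a / tofrac b := F x.
  have ey : y = tofrac c / tofrac d := F y.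
  have hb : b != 0 by apply: D. have hd : d != 0 by apply: D.
  have tb : tofrac b != 0 :> Mould m by rewrite tofrac_eq0.
  have td : tofrac d != 0 :> Mould m by rewrite tofrac_eq0.
  have -> : x - y = tofrac (a * d - c * b) / tofrac (b * d) :> Mould m.
    by rewrite {1}ex {1}ey tofracB !tofracM -mulNr addf_div // mulNr.
  rewrite {1}ex {1}ey.
  rewrite !msubst_frac ?mulf_neq0 // -!mvE rmorphB !rmorphM !mvE.
  have mb := mv_neq0 hb; have md := mv_neq0 hd.
  by rewrite -[in RHS]mulNr [in RHS]addf_div // mulNr.
- have -> : (1 : Mould m) = tofrac 1 / tofrac 1 by rewrite tofrac1 divr1.
  by rewrite msubst_frac ?oner_neq0 // -mvE rmorph1 divr1.
- set a := (frac (repr_of x)).1; set b := (frac (repr_of x)).2.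
  set c := (frac (repr_of y)).1; set d := (frac (repr_of y)).2.
  have ex : x = tofrac a / tofrac b := F x.
  have ey : y = tofrac c / tofrac d := F y.
  have hb : b != 0 by apply: D. have hd : d != 0 by apply: D.
  have -> : x * y = tofrac (a * c) / tofrac (b * d) :> Mould m.
    by rewrite {1}ex {1}ey !tofracM mulrACA invfM.
  rewrite {1}ex {1}ey.
  rewrite !msubst_frac ?mulf_neq0 // -!mvE !rmorphM !mvE.
  by rewrite mulrACA invfM.
Qed.

Definition msRM : {rmorphism Mould m -> Mould n} :=
  packRM msubst_morph.1 msubst_morph.2.

Lemma msubst_tofrac a : msubst v (tofrac a) = meval v a.
Proof.
have -> : tofrac a = tofrac a / tofrac 1 :> Mould m by rewrite tofrac1 divr1.
by rewrite msubst_frac ?oner_neq0 // -(mvE 1) rmorph1 divr1.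
Qed.

Lemma msubst_u j : msubst v (u j) = v j.
Proof. by rewrite /u msubst_tofrac mevF_mX. Qed.

End Msubst.

Definition phiL n (L : {set 'I_n} -> Mould n) (F : FF n) : Mould n :=
  \prod_(S : nesub n) (L (val S)) ^ (F S).

Section PhiL.
Variables (n : nat) (L : {set 'I_n} -> Mould n).
Hypothesis hL : forall S : nesub n, L (val S) != 0.

Lemma phiL_add A B : phiL L (A + B) = phiL L A * phiL L B.
Proof.
rewrite /phiL -big_split; apply: eq_bigr => S _.
by rewrite ffunE expfzDr.
Qed.

Lemma phiL_opp A : phiL L (- A) = (phiL L A)^-1.
Proof.
rewrite /phiL -prodfV; apply: eq_bigr => S _.
by rewrite ffunE invr_expz.
Qed.

Lemma phiL_zero : phiL L 0 = 1.
Proof. by rewrite /phiL big1 // => S _; rewrite ffunE expr0z. Qed.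

Lemma phiL_neq0 A : phiL L A != 0.
Proof. by rewrite /phiL prodf_seq_neq0; apply/allP => S _; rewrite expfz_neq0. Qed.

Lemma phiL_gen (S : {set 'I_n}) : S != set0 -> phiL L (FFgen S) = L S.
Proof.
move=> hS; pose S0 : nesub n := exist _ S hS.
rewrite /phiL (bigD1 S0) //= big1 ?mulr1.
  by rewrite ffunE eqxx expr1z.
move=> T hT; rewrite ffunE.
suff -> : (val T == S) = false by rewrite expr0z.
by apply: negbTE; apply: contra hT => /eqP e; apply/eqP/val_inj.
Qed.
End PhiL.

Lemma phiL_map p q (L : {set 'I_q} -> Mould q) (f : {set 'I_p} -> {set 'I_q}) F :
  (forall S : nesub q, L (val S) != 0) ->
  (forall S : nesub p, f (val S) != set0) ->
  phiL L (FFmap f F) = \prod_(S : nesub p) (L (f (val S))) ^ (F S).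
Proof.
move=> hL hf; rewrite /phiL.
have -> : \prod_(T : nesub q) L (val T) ^ FFmap f F T =
          \prod_(T : nesub q) \prod_(S : nesub p | f (val S) == val T) L (val T) ^ (F S).
  apply: eq_bigr => T _; rewrite ffunE.
  exact: (big_morph (fun z : int => L (val T) ^ z) (fun a b => expfzDr a b (hL T)) (expr0z _)).
rewrite (exchange_big_dep xpredT) //=; apply: eq_bigr => S _.
pose T0 : nesub q := exist _ (f (val S)) (hf S).
rewrite (bigD1 T0) //= big1 ?mulr1 //.
move=> T /andP [/eqP e hT]; exfalso; apply/negP: hT; rewrite negbK.
by apply/eqP/val_inj; rewrite /= e.
Qed.

Section Blk.
Variables (m n : nat) (i : 'I_m.+1).
Local Open Scope nat_scope.

Lemma mem_blk (k : 'I_m.+1) (j : 'I_(m + n).+1) :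
  (j \in blk n i k) = [|| (k < i)%N && (j == k :> nat),
                         (k == i :> nat) && (i <= j <= i + n)%N
                       | (i < k)%N && (j == k + n :> nat)].
Proof.
rewrite inE; case: (ltngtP k i) => h.
- by rewrite /= orbF; case: (j == k :> nat); rewrite ?andbF //; lia.
- have -> : (k == i) = false by apply/negbTE; rewrite -val_eqE /=; lia.
  by rewrite /=; case: (j == k + n :> nat) => //; lia.
- have -> : k = i by apply: val_inj.
  by rewrite eqxx /= orbF.
Qed.

Definition rep (k : 'I_m.+1) : 'I_(m + n).+1 := inord (if (k <= i)%N then nat_of_ord k else k + n)%N.

Lemma repE k : rep k = (if (k <= i)%N then nat_of_ord k else k + n)%N :> nat.
Proof. rewrite inordK //; case: ifP => _; have := ltn_ord k; lia. Qed.

Lemma rep_in k : rep k \in blk n i k.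
Proof.
rewrite mem_blk repE; case: (ltngtP k i) => h; rewrite ?eqxx ?andbT /=.
- by [].
- by [].
- by rewrite orbF; apply/andP; split; lia.
Qed.

Lemma blk_other k j : j \in blk n i k -> j != rep k -> (i < j <= i + n)%N.
Proof.
move=> h1 h2; have h3 : (j : nat) != rep k by rewrite val_eqE.
move: h3; rewrite repE; rewrite mem_blk in h1.
case: ifP => hk h3; case/or3P: h1 => /andP [a1 a2]; lia.
Qed.

Lemma blk_ne k : blk n i k != set0.
Proof. by apply/set0Pn; exists (rep k); apply: rep_in. Qed.

Lemma blk_disj k k' : k != k' -> [disjoint blk n i k & blk n i k'].
Proof.
move=> hk; apply/pred0P => j /=; apply/negbTE/negP => /andP [].
rewrite !mem_blk => h1 h2; move: hk; rewrite -val_eqE /=.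
case/or3P: h1 => /andP [a1 a2]; case/or3P: h2 => /andP [b1 b2]; lia.
Qed.
End Blk.
Lemma mevF_mX' N k (w : 'I_k -> Mould N) j : mevF w (mX j) = w j.
Proof. exact: mevF_mX. Qed.

Section Comp.
Variables (m n : nat) (i : 'I_m.+1).

Lemma big_blk (R : Type) (idx : R) (op : Monoid.com_law idx) (E : 'I_(m + n).+1 -> R)
  (S : {set 'I_m.+1}) :
  \big[op/idx]_(j in \bigcup_(k in S) blk n i k) E j =
  \big[op/idx]_(k in S) \big[op/idx]_(j in blk n i k) E j.
Proof.
pose F k := if k \in S then blk n i k else set0.
have -> : \bigcup_(k in S) blk n i k = \bigcup_k F k.
  by rewrite big_mkcond.
rewrite partition_disjoint_bigcup.
  rewrite [RHS]big_mkcond; apply: eq_bigr => k _; rewrite /F.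
  by case: (k \in S) => //; rewrite big_set0.
move=> k k' hk; rewrite /F.
case: (k \in S); case: (k' \in S); try by [].
- exact: blk_disj.
all: by apply/pred0P => x /=; rewrite ?inE ?andbF.
Qed.

Lemma big_blk1 (R : Type) (idx : R) (op : Monoid.com_law idx) (E : 'I_(m + n).+1 -> R) (k : 'I_m.+1) :
  (forall j : 'I_(m + n).+1, (i < j <= i + n)%N -> E j = idx) ->
  \big[op/idx]_(j in blk n i k) E j = E (rep n i k).
Proof.
move=> hE; rewrite (bigD1 (rep n i k)) ?rep_in //= big1 ?Monoid.mulm1 //.
by move=> j /andP [h1 h2]; apply: hE; apply: (blk_other h1 h2).
Qed.

Definition wfun (c : Mould m.+1) (j : 'I_(m + n).+1) : Mould m.+1 :=
  if (j <= i)%N then u (inord j) else if (i + n < j)%N then u (inord (j - n)) else c.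

Lemma wfun_rep c k : wfun c (rep n i k) = u k.
Proof.
have := repE n i k; rewrite /wfun.
case: (leqP k i) => hk ->.
  by rewrite hk inord_val.
rewrite ifF; last by lia.
by rewrite ifT ?addnK ?inord_val //; lia.
Qed.

Lemma wfun_mid c (j : 'I_(m + n).+1) : (i < j <= i + n)%N -> wfun c j = c.
Proof. by move=> h; rewrite /wfun ifF; [rewrite ifF //|]; lia. Qed.

Lemma Sig_inj p : meval (Sig n i) p = 0 -> p = 0.
Proof.
pose q k : mpoly (m + n).+1 := \sum_(j in blk n i k) mX j.
have e : Sig n i =1 (fun k => tofrac (q k)).
  by move=> k; rewrite /Sig /q rmorph_sum.
rewrite (meval_ext (cstF _) e); apply: (meval_inj (w := wfun 0)) => k.
rewrite /q -[meval _ _]/(mevF (wfun 0) _) rmorph_sum.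
under eq_bigr do rewrite mevF_mX'.
by rewrite big_blk1 ?wfun_rep // => j hj; rewrite wfun_mid.
Qed.

Lemma Pi_inj p : meval (Pi n i) p = 0 -> p = 0.
Proof.
pose q k : mpoly (m + n).+1 := \prod_(j in blk n i k) mX j.
have e : Pi n i =1 (fun k => tofrac (q k)).
  by move=> k; rewrite /Pi /q rmorph_prod.
rewrite (meval_ext (cstF _) e); apply: (meval_inj (w := wfun 1)) => k.
rewrite /q -[meval _ _]/(mevF (wfun 1) _) rmorph_prod.
under eq_bigr do rewrite mevF_mX'.
by rewrite big_blk1 ?wfun_rep // => j hj; rewrite wfun_mid.
Qed.

Lemma shftE (j : 'I_n.+1) : shft i j = (i + j)%N :> nat.
Proof. by rewrite /shft inordK //; have := ltn_ord i; have := ltn_ord j; lia. Qed.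

Lemma shft_inj : injective (@shft m n i).
Proof. by move=> j j' e; apply: val_inj => /=; have := shftE j; have := shftE j'; rewrite e; lia. Qed.

Definition tfun (t : 'I_(m + n).+1) : Mould n.+1 :=
  if (i <= t <= i + n)%N then u (inord (t - i)) else 0.

Lemma shft_inj2 p : meval (fun j : 'I_n.+1 => u (shft i j)) p = 0 -> p = 0.
Proof.
apply: (meval_inj (w := tfun)) => k.
rewrite mevF_mX /tfun shftE ifT; last by have := ltn_ord k; lia.
by rewrite addKn inord_val.
Qed.

End Comp.

Lemma perm_inj2 n (s : {perm 'I_n}) p : meval (fun j => u (s j)) p = 0 -> p = 0.
Proof.
apply: (meval_inj (w := fun t => u ((s^-1)%g t))) => k.
by rewrite mevF_mX permK.
Qed.

Definition idQ : {rmorphism rat -> rat} := idfun.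

Definition L0 n (S : {set 'I_n}) : Mould n := \sum_(j in S) u j.
Definition L1 n (S : {set 'I_n}) : Mould n := \prod_(j in S) u j - 1.

Lemma meval_mX' (K : fieldType) (g : {rmorphism rat -> K}) n (v : 'I_n -> K) j :
  mevalRM g v (mX j) = v j.
Proof. exact: meval_mX. Qed.

Lemma L0_neq0 n (S : {set 'I_n}) : S != set0 -> L0 S != 0.
Proof.
move=> hS; have -> : L0 S = tofrac (\sum_(j in S) mX j) by rewrite rmorph_sum.
rewrite tofrac_eq0; apply/negP => /eqP h0.
have := congr1 (mevalRM idQ (fun _ => 1)) h0.
rewrite rmorph_sum rmorph0; under eq_bigr do rewrite meval_mX'.
by rewrite sumr_const => /eqP; rewrite pnatr_eq0 cards_eq0 (negbTE hS).
Qed.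

Lemma L1_neq0 n (S : {set 'I_n}) : S != set0 -> L1 S != 0.
Proof.
move=> hS; have -> : L1 S = tofrac (\prod_(j in S) mX j - 1) by rewrite rmorphB rmorph1 rmorph_prod.
rewrite tofrac_eq0; apply/negP => /eqP h0.
have := congr1 (mevalRM idQ (fun _ => 0)) h0.
rewrite rmorphB rmorph1 rmorph_prod rmorph0; under eq_bigr do rewrite meval_mX'.
rewrite prodr_const expr0n.
have -> : (#|S| == 0%N) = false by rewrite cards_eq0 (negbTE hS).
by move=> /eqP; rewrite sub0r oppr_eq0 oner_eq0.
Qed.

Lemma L0_ne n (S : nesub n) : L0 (val S) != 0.
Proof. exact: L0_neq0 (valP S). Qed.
Lemma L1_ne n (S : nesub n) : L1 (val S) != 0.
Proof. exact: L1_neq0 (valP S). Qed.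

Lemma phi0E n (F : FF n) : phi0 F = phiL (@L0 n) F. Proof. by []. Qed.
Lemma phi1E n (F : FF n) : phi1 F = phiL (@L1 n) F. Proof. by []. Qed.

Lemma bigcup_ne m n (i : 'I_m.+1) (S : nesub m.+1) :
  \bigcup_(k in val S) blk n i k != set0.
Proof.
have [k hk] := set0Pn _ (valP S).
apply/set0Pn; exists (rep n i k); apply/bigcupP; exists k => //; exact: rep_in.
Qed.

Lemma imset_ne (p q : nat) (f : 'I_p -> 'I_q) (S : nesub p) : f @: (val S) != set0.
Proof. by rewrite imset_eq0; exact: valP S. Qed.

Lemma comp0 m n (i : 'I_m.+1) (F : FF m.+1) (G : FF n.+1) :
  phi0 (FFcomp i F G) = Mcomp0 i (phi0 F) (phi0 G).
Proof.
rewrite /FFcomp !phi0E !phiL_add; try exact: L0_ne.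
rewrite phiL_gen ?blk_ne // !phiL_map; try exact: L0_ne; try exact: bigcup_ne; try exact: imset_ne.
rewrite /Mcomp0; congr (_ * _ * _).
- rewrite -[msubst (Sig n i) _]/(msRM (@Sig_inj m n i) _) rmorph_prod.
  apply: eq_bigr => S _; rewrite fmorphXz; congr (_ ^ _).
  rewrite /L0 rmorph_sum big_blk; apply: eq_bigr => k _.
  exact: (esym (msubst_u (@Sig_inj m n i) k)).
- rewrite -[msubst _ (phiL _ G)]/(msRM (@shft_inj2 m n i) _) rmorph_prod.
  apply: eq_bigr => S _; rewrite fmorphXz; congr (_ ^ _).
  rewrite /L0 rmorph_sum big_imset /=; last by move=> x y _ _; apply: shft_inj.
  by apply: eq_bigr => k _; exact: (esym (msubst_u (@shft_inj2 m n i) k)).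
Qed.

Lemma comp1 m n (i : 'I_m.+1) (F : FF m.+1) (G : FF n.+1) :
  phi1 (FFcomp i F G) = Mcomp1 i (phi1 F) (phi1 G).
Proof.
rewrite /FFcomp !phi1E !phiL_add; try exact: L1_ne.
rewrite phiL_gen ?blk_ne // !phiL_map; try exact: L1_ne; try exact: bigcup_ne; try exact: imset_ne.
rewrite /Mcomp1; congr (_ * _ * _).
- rewrite -[msubst (Pi n i) _]/(msRM (@Pi_inj m n i) _) rmorph_prod.
  apply: eq_bigr => S _; rewrite fmorphXz; congr (_ ^ _).
  rewrite /L1 rmorphB rmorph1 rmorph_prod big_blk; congr (_ - 1); apply: eq_bigr => k _.
  exact: (esym (msubst_u (@Pi_inj m n i) k)).
- rewrite -[msubst _ (phiL _ G)]/(msRM (@shft_inj2 m n i) _) rmorph_prod.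
  apply: eq_bigr => S _; rewrite fmorphXz; congr (_ ^ _).
  rewrite /L1 rmorphB rmorph1 rmorph_prod big_imset /=; last by move=> x y _ _; apply: shft_inj.
  congr (_ - 1).
  by apply: eq_bigr => k _; exact: (esym (msubst_u (@shft_inj2 m n i) k)).
Qed.

Lemma act0 n (s : {perm 'I_n}) (F : FF n) : phi0 (FFact s F) = Mact s (phi0 F).
Proof.
rewrite /FFact !phi0E phiL_map; try exact: L0_ne; try exact: imset_ne.
rewrite /Mact -[msubst _ _]/(msRM (@perm_inj2 n s) _) rmorph_prod.
apply: eq_bigr => S _; rewrite fmorphXz; congr (_ ^ _).
rewrite /L0 rmorph_sum big_imset /=; last by move=> x y _ _; apply: perm_inj.
by apply: eq_bigr => k _; exact: (esym (msubst_u (@perm_inj2 n s) k)).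
Qed.

Lemma act1 n (s : {perm 'I_n}) (F : FF n) : phi1 (FFact s F) = Mact s (phi1 F).
Proof.
rewrite /FFact !phi1E phiL_map; try exact: L1_ne; try exact: imset_ne.
rewrite /Mact -[msubst _ _]/(msRM (@perm_inj2 n s) _) rmorph_prod.
apply: eq_bigr => S _; rewrite fmorphXz; congr (_ ^ _).
rewrite /L1 rmorphB rmorph1 rmorph_prod big_imset /=; last by move=> x y _ _; apply: perm_inj.
congr (_ - 1).
by apply: eq_bigr => k _; exact: (esym (msubst_u (@perm_inj2 n s) k)).
Qed.

Lemma unit0 : phi0 FFunit = Munit0.
Proof.
rewrite /FFunit phi0E phiL_opp phiL_gen.
  by rewrite /L0 big_set1.
by apply/set0Pn; exists ord0; rewrite inE.
Qed.

Lemma unit1 : phi1 FFunit = Munit1.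
Proof.
rewrite /FFunit phi1E phiL_opp phiL_gen.
  by rewrite /L1 big_set1.
by apply/set0Pn; exists ord0; rewrite inE.
Qed.
Lemma bin_nat n (f g : nat -> bool) :
  (\sum_(j < n) f j * 2 ^ j = \sum_(j < n) g j * 2 ^ j)%N ->
  forall j, (j < n)%N -> f j = g j.
Proof.
elim: n f g => [|n IH] f g E j hj; first by [].
move: E; rewrite !big_ord_recl /=.
have D (h : nat -> bool) : (\sum_(i < n) h (bump 0 i) * 2 ^ bump 0 i =
                           2 * \sum_(i < n) h i.+1 * 2 ^ i)%N.
  by rewrite big_distrr /=; apply: eq_bigr => i _; rewrite /bump /= add1n expnS mulnCA.
rewrite !D => E.
have h0 : f 0%N = g 0%N by move: E; case: (f 0%N); case: (g 0%N) => //=; lia.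
case: j hj => [|j] hj; first exact: h0.
apply: (IH (fun i => f i.+1) (fun i => g i.+1)) => //.
by move: E; rewrite h0; lia.
Qed.

Lemma bin_uniq n (A B : {set 'I_n}) :
  (\sum_(j in A) 2 ^ j = \sum_(j in B) 2 ^ j)%N -> A = B.
Proof.
case: n A B => [|n] A B E.
  by apply/setP => [[]].
have C (X : {set 'I_n.+1}) : (\sum_(j in X) 2 ^ j = \sum_(j < n.+1) (inord j \in X) * 2 ^ j)%N.
  rewrite big_mkcond; apply: eq_bigr => j _; rewrite inord_val.
  by case: (j \in X); rewrite ?mul1n ?mul0n.
move: E; rewrite !C => E.
apply/setP => j; have := @bin_nat _ (fun j => inord j \in A) (fun j => inord j \in B) E j (ltn_ord j).
by rewrite /= inord_val.
Qed.

Lemma key (R : numDomainType) n (S0 : {set 'I_n}) : S0 != set0 ->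
  exists a : 'I_n -> R, forall T : {set 'I_n}, T != set0 ->
    (\sum_(j in T) a j == 0) = (T == S0).
Proof.
case/set0Pn => s0 hs0.
pose b (T : {set 'I_n}) := (\sum_(j in T | j != s0) 2 ^ j)%N.
pose a j : R := if j == s0 then - (b S0)%:R else (2 ^ j)%:R.
exists a => T hT.
have sE : \sum_(j in T) a j = (if s0 \in T then - (b S0)%:R else 0) + (b T)%:R.
  rewrite (bigID (fun j => j == s0)) /=; congr (_ + _).
    case: ifP => hT0.
      rewrite (big_pred1 s0) /a ?eqxx // => j /=.
      by case: eqP => [->|]; rewrite ?hT0 ?andbF ?andbT.
    by rewrite big_pred0 // => j /=; case: eqP => [->|]; rewrite ?hT0 ?andbF.
  rewrite /b natr_sum; apply: eq_bigr => j /andP [_ hj].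
  by rewrite /a (negbTE hj).
have bD (X : {set 'I_n}) : b X = (\sum_(j in X :\ s0) 2 ^ j)%N.
  by apply: eq_bigl => j; rewrite !inE andbC.
rewrite sE; case: ifP => hsT.
  rewrite addrC subr_eq0 eqr_nat.
  apply/eqP/eqP => [e|->//].
  by rewrite -(setD1K hsT) -(setD1K hs0); congr (_ |: _); apply: bin_uniq; rewrite -!bD.
have -> : (T == S0) = false by apply/negbTE; apply: contraFneq hsT => ->.
rewrite add0r pnatr_eq0; apply/negbTE; rewrite -lt0n.
case/set0Pn: hT => t ht.
rewrite /b (bigD1 t) /=; last by rewrite ht; apply: contraFneq hsT => <-.
by rewrite addn_gt0 expn_gt0.
Qed.

Definition zp (z : int) : nat := if z is Posz k then k else 0%N.
Definition zn (z : int) : nat := if z is Negz k then k.+1 else 0%N.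

Lemma expz_split (F : fieldType) (x : F) (z : int) : x ^ z = x ^+ zp z / x ^+ zn z.
Proof. by case: z => k /=; rewrite ?expr0 ?divr1 ?mul1r. Qed.

Lemma phiL_inj_gen n (l : {set 'I_n} -> mpoly n) :
  (forall S : nesub n, l (val S) != 0) ->
  (forall S0 : nesub n, exists c : 'I_n -> rat,
      forall T : nesub n, (mevalRM idQ c (l (val T)) == 0) = (T == S0)) ->
  injective (phiL (fun S => tofrac (l S))).
Proof.
move=> hl hc F G eFG.
have hL : forall S : nesub n, tofrac (l (val S)) != 0 :> Mould n.
  by move=> S; rewrite tofrac_eq0.
have H1 : phiL (fun S => tofrac (l S)) (F - G) = 1.
  by rewrite phiL_add // phiL_opp eFG mulfV // phiL_neq0.
apply/eqP; rewrite -subr_eq0; apply/eqP.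
move: H1; set H := F - G => H1.
apply/ffunP => S0; rewrite [RHS]ffunE.
have [c hcS] := hc S0.
pose P := \prod_(T : nesub n) l (val T) ^+ zp (H T).
pose Q := \prod_(T : nesub n) l (val T) ^+ zn (H T).
have hQ : Q != 0 by rewrite prodf_seq_neq0; apply/allP => T _; rewrite expf_neq0.
have E : phiL (fun S => tofrac (l S)) H = tofrac P / tofrac Q.
  rewrite /phiL; under eq_bigr do rewrite expz_split.
  by rewrite prodf_div !rmorph_prod; congr (_ / _); apply: eq_bigr => T _; rewrite rmorphXn.
have hPQ : P = Q.
  move: H1; rewrite E => /(congr1 (fun z => z * tofrac Q)).
  rewrite mulfVK ?tofrac_eq0 // mul1r => /eqP; rewrite tofrac_eq => /eqP //.
have hasE (e : nesub n -> nat) :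
    (mevalRM idQ c (\prod_(T : nesub n) l (val T) ^+ e T) == 0) = (0 < e S0)%N.
  rewrite rmorph_prod prodf_seq_eq0.
  apply/hasP/idP => [[T _]|h].
    by rewrite rmorphXn expf_eq0 hcS => /and3P [_ h /eqP <-].
  by exists S0; rewrite ?mem_index_enum // rmorphXn expf_eq0 hcS eqxx andbT.
have := hasE (fun T => zp (H T)); have := hasE (fun T => zn (H T)).
rewrite -/P -/Q hPQ => -> /=.
by case: (H S0) => [[|k]|k] //=.
Qed.

Lemma inj0 n : injective (@phi0 n).
Proof.
pose l (S : {set 'I_n}) : mpoly n := \sum_(j in S) mX j.
have Eq : forall F : FF n, phi0 F = phiL (fun S => tofrac (l S)) F.
  by move=> F; rewrite /phi0 /phiL; apply: eq_bigr => S _; rewrite /l rmorph_sum.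
move=> F G e; apply: (@phiL_inj_gen n l); rewrite -?Eq //.
  move=> S; have := L0_ne S; rewrite /L0 /l -rmorph_sum tofrac_eq0 //.
move=> S0; have [a ha] := key rat (valP S0).
exists a => T; rewrite /l rmorph_sum.
under eq_bigr do rewrite meval_mX'.
by rewrite ha ?(valP T) // val_eqE.
Qed.

Lemma pow2_eq1 (z : int) : ((2%:R : rat) ^ z == 1) = (z == 0).
Proof.
have h2 : (1 : rat) < 2%:R by [].
case: z => [[|k]|k] //=.
  by rewrite gt_eqF // exprn_egt1.
by rewrite invr_eq1 gt_eqF // exprn_egt1.
Qed.

Lemma inj1 n : injective (@phi1 n).
Proof.
pose l (S : {set 'I_n}) : mpoly n := \prod_(j in S) mX j - 1.
have Eq : forall F : FF n, phi1 F = phiL (fun S => tofrac (l S)) F.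
  by move=> F; rewrite /phi1 /phiL; apply: eq_bigr => S _; rewrite /l rmorphB rmorph1 rmorph_prod.
move=> F G e; apply: (@phiL_inj_gen n l); rewrite -?Eq //.
  move=> S; have := L1_ne S; rewrite /L1.
  have -> : \prod_(j in val S) u j - 1 = tofrac (l (val S)) by rewrite /l rmorphB rmorph1 rmorph_prod.
  by rewrite tofrac_eq0.
move=> S0; have [a ha] := key int (valP S0).
exists (fun j => (2%:R : rat) ^ (a j)) => T; rewrite /l rmorphB rmorph1 rmorph_prod.
under eq_bigr do rewrite meval_mX'.
have h2 : (2%:R : rat) != 0 by [].
rewrite -(big_morph (fun z : int => (2%:R : rat) ^ z) (fun x y => expfzDr x y h2) (expr0z _)).
by rewrite subr_eq0 pow2_eq1 ha ?(valP T) // val_eqE.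
Qed.

Theorem mainTheorem2 :
  (* phi^0 : FF^Sigma -> Mould_0^Sigma *)
  [/\ (forall (m n : nat) (i : 'I_m.+1) (F : FF m.+1) (G : FF n.+1),
         phi0 (FFcomp i F G) = Mcomp0 i (phi0 F) (phi0 G)),
      (forall (n : nat) (s : {perm 'I_n}) (F : FF n),
         phi0 (FFact s F) = Mact s (phi0 F)),
      phi0 FFunit = Munit0
    & (forall (n : nat), injective (@phi0 n))]
  /\
  (* phi^1 : FF^Sigma -> Mould_1^Sigma *)
  [/\ (forall (m n : nat) (i : 'I_m.+1) (F : FF m.+1) (G : FF n.+1),
         phi1 (FFcomp i F G) = Mcomp1 i (phi1 F) (phi1 G)),
      (forall (n : nat) (s : {perm 'I_n}) (F : FF n),
         phi1 (FFact s F) = Mact s (phi1 F)),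
      phi1 FFunit = Munit1
    & (forall (n : nat), injective (@phi1 n))].
Proof.
split; split.
- exact: comp0.
- exact: act0.
- exact: unit0.
- exact: inj0.
- exact: comp1.
- exact: act1.
- exact: unit1.
- exact: inj1.
Qed.
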